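(* Let $f_1,\dots,f_n:\mathbb{R}^d\to\mathbb{R}$ satisfy Assumptions A1 and A2. Then for all $x\in\mathbb{R}^d$ and $\beta\in\Delta^{n-1}$, \[\|\nabla x^*(\beta)-\widehat{\nabla}x^*(x,\beta)\|_{1,2}\le\frac{1}{\mu}\frac{M_1}{2M_0}\|\nabla f_\beta(x)\|_2.\]
   Context: Assumption A1: each $f_i$ is twice differentiable with $\mu\mathbf{I}\preceq\nabla^2 f_i\preceq L\mathbf{I}$, $0<\mu\le L$, $\kappa:=L/\mu$. Assumption A2: each $\nabla^2 f_i$ is $L_H$-Lipschitz (operator norm). $F=(f_1,\dots,f_n)$, $\nabla F(x)\in\mathbb{R}^{n\times d}$ its Jacobian, $f_\beta=\sum_i\beta_if_i$, $x^*(\beta)=x_\beta=\operatorname{argmin}_x f_\beta(x)$, so $\nabla x^*(\beta)=-\nabla^2f_\beta(x_\beta)^{-1}\nabla F(x_\beta)^\top$. The approximation is $\widehat{\nabla}x^*(x,\beta):=-\nabla^2 f_\beta(x)^{-1}\nabla F(x)^\top$. $R$ is the $\ell_2$-diameter of the Pareto set of $F$ (the set of $x$ with $\nabla f_\beta(x)=0$ for some $\beta\in\Delta^{n-1}$), $M_0:=\kappa R$, $M_1:=2\kappa^2R(1+L_HR/\mu)$. $\|A\|_{1,2}:=\sup_{\|z\|_1=1}\|Az\|_2$. *)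

(* Defs.v *)
From HB Require Import structures.
From mathcomp Require Import all_boot all_order all_algebra.
From mathcomp Require Import all_classical all_reals all_analysis.
Set Implicit Arguments. Unset Strict Implicit. Unset Printing Implicit Defensive.
Import Order.TTheory GRing.Theory Num.Theory.
Import numFieldNormedType.Exports.
Local Open Scope classical_set_scope.
Local Open Scope ring_scope.

Section Defs.
Variable R : realType.

Definition norm2 (m n : nat) (A : 'M[R]_(m, n)) : R :=
  Num.sqrt (\sum_(i < m) \sum_(j < n) A i j ^+ 2).

Definition norm1 (n : nat) (z : 'cV[R]_n) : R := \sum_(i < n) `|z i 0|.

Definition norm12 (d n : nat) (A : 'M[R]_(d, n)) : R :=
  sup [set norm2 (A *m z) | z in [set z : 'cV[R]_n | norm1 z = 1]].

Definition opnorm (d : nat) (A : 'M[R]_d) : R :=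
  sup [set norm2 (A *m v) | v in [set v : 'cV[R]_d | norm2 v = 1]].

Definition loewner_le (d : nat) (A B : 'M[R]_d) : Prop :=
  forall v : 'rV[R]_d, 0 <= (v *m (B - A) *m v^T) 0 0.

Definition grad (d : nat) (f : 'rV[R]_d -> R) (x : 'rV[R]_d) : 'rV[R]_d :=
  \row_j ('d f x (delta_mx 0 j : 'rV[R]_d)).

Definition hess (d : nat) (f : 'rV[R]_d -> R) (x : 'rV[R]_d) : 'M[R]_d :=
  \matrix_(j, k) ('d (grad f) x (delta_mx 0 j : 'rV[R]_d)) 0 k.

Definition twice_differentiable (d : nat) (f : 'rV[R]_d -> R) : Prop :=
  forall x, differentiable f x /\ differentiable (grad f) x.

Definition jacobian (n d : nat) (f : 'I_n -> 'rV[R]_d -> R) (x : 'rV[R]_d)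
  : 'M[R]_(n, d) := \matrix_(i, j) grad (f i) x 0 j.

Definition simplex (n : nat) (beta : 'I_n -> R) : Prop :=
  (forall i, 0 <= beta i) /\ \sum_(i < n) beta i = 1.

Definition fbeta (n d : nat) (f : 'I_n -> 'rV[R]_d -> R) (beta : 'I_n -> R)
  (x : 'rV[R]_d) : R := \sum_(i < n) beta i * f i x.

Definition pareto_set (n d : nat) (f : 'I_n -> 'rV[R]_d -> R) : set 'rV[R]_d :=
  [set x | exists beta, simplex beta /\ grad (fbeta f beta) x = 0].

Definition diam2 (d : nat) (S : set 'rV[R]_d) : R :=
  sup [set norm2 (x - y) | x in S & y in S].

Definition grad_xstar (n d : nat) (f : 'I_n -> 'rV[R]_d -> R) (beta : 'I_n -> R)
  (xb : 'rV[R]_d) : 'M[R]_(d, n) :=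
  - (invmx (hess (fbeta f beta) xb) *m (jacobian f xb)^T).

Definition grad_xstar_hat (n d : nat) (f : 'I_n -> 'rV[R]_d -> R) (x : 'rV[R]_d)
  (beta : 'I_n -> R) : 'M[R]_(d, n) :=
  - (invmx (hess (fbeta f beta) x) *m (jacobian f x)^T).

End Defs.

(* Main.v *)
Require Import Defs.
From HB Require Import structures.
From mathcomp Require Import all_boot all_order all_algebra.
From mathcomp Require Import all_classical all_reals all_analysis.
From mathcomp Require Import ring lra.
Import Order.TTheory GRing.Theory Num.Theory.
Import numFieldNormedType.Exports.
Local Open Scope classical_set_scope.
Local Open Scope ring_scope.
Set Implicit Arguments. Unset Strict Implicit. Unset Printing Implicit Defensive.

Section Norms.
Variable R : realType.

Definition dotM (m n : nat) (A B : 'M[R]_(m, n)) : R :=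
  \sum_(i < m) \sum_(j < n) A i j * B i j.

Lemma norm2E m n (A : 'M[R]_(m, n)) : norm2 A = Num.sqrt (dotM A A).
Proof.
by rewrite /norm2 /dotM; congr Num.sqrt; apply: eq_bigr => i _;
  apply: eq_bigr => j _; rewrite expr2.
Qed.

Lemma dotMC m n (A B : 'M[R]_(m, n)) : dotM A B = dotM B A.
Proof. by apply: eq_bigr => i _; apply: eq_bigr => j _; rewrite mulrC. Qed.

Lemma dotMDl m n (A B C : 'M[R]_(m, n)) : dotM (A + B) C = dotM A C + dotM B C.
Proof.
rewrite /dotM -big_split; apply: eq_bigr => i _; rewrite -big_split.
by apply: eq_bigr => j _; rewrite !mxE mulrDl.
Qed.

Lemma dotMZl m n k (A B : 'M[R]_(m, n)) : dotM (k *: A) B = k * dotM A B.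
Proof.
rewrite /dotM mulr_sumr; apply: eq_bigr => i _; rewrite mulr_sumr.
by apply: eq_bigr => j _; rewrite !mxE mulrA.
Qed.

Lemma dotMNl m n (A B : 'M[R]_(m, n)) : dotM (- A) B = - dotM A B.
Proof. by rewrite -scaleN1r dotMZl mulN1r. Qed.

Lemma dotMBl m n (A B C : 'M[R]_(m, n)) : dotM (A - B) C = dotM A C - dotM B C.
Proof. by rewrite dotMDl dotMNl. Qed.

Lemma dotMDr m n (A B C : 'M[R]_(m, n)) : dotM C (A + B) = dotM C A + dotM C B.
Proof. by rewrite dotMC dotMDl !(dotMC C). Qed.

Lemma dotMZr m n k (A B : 'M[R]_(m, n)) : dotM B (k *: A) = k * dotM B A.
Proof. by rewrite dotMC dotMZl dotMC. Qed.

Lemma dotMNr m n (A B : 'M[R]_(m, n)) : dotM B (- A) = - dotM B A.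
Proof. by rewrite dotMC dotMNl dotMC. Qed.

Lemma dotMBr m n (A B C : 'M[R]_(m, n)) : dotM C (A - B) = dotM C A - dotM C B.
Proof. by rewrite dotMDr dotMNr. Qed.

Lemma dotM0l m n (B : 'M[R]_(m, n)) : dotM 0 B = 0.
Proof. by rewrite -(scale0r (0 : 'M[R]_(m,n))) dotMZl mul0r. Qed.

Lemma dotM0r m n (B : 'M[R]_(m, n)) : dotM B 0 = 0.
Proof. by rewrite dotMC dotM0l. Qed.

Lemma dotM_suml m n I (r : seq I) (P : pred I) (F : I -> 'M[R]_(m, n)) C :
  dotM (\sum_(i <- r | P i) F i) C = \sum_(i <- r | P i) dotM (F i) C.
Proof.
apply: (big_ind2 (fun a b => dotM a C = b)); first exact: dotM0l.
  by move=> a b c e h1 h2; rewrite dotMDl h1 h2.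
by [].
Qed.

Lemma dotMM_ge0 m n (A : 'M[R]_(m, n)) : 0 <= dotM A A.
Proof. by apply: sumr_ge0 => i _; apply: sumr_ge0 => j _; rewrite -expr2 sqr_ge0. Qed.

Lemma dotMM_eq0 m n (A : 'M[R]_(m, n)) : dotM A A = 0 -> A = 0.
Proof.
move=> /eqP; rewrite psumr_eq0; last first.
  by move=> i _; apply: sumr_ge0 => j _; rewrite -expr2 sqr_ge0.
move=> /allP H; apply/matrixP => i j; rewrite mxE.
have /H /implyP /(_ isT) := mem_index_enum i.
rewrite psumr_eq0; last by move=> k _; rewrite -expr2 sqr_ge0.
move=> /allP /(_ j (mem_index_enum j)) /implyP /(_ isT).
by rewrite mulf_eq0 orbb => /eqP.
Qed.

Lemma norm2_ge0 m n (A : 'M[R]_(m, n)) : 0 <= norm2 A.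
Proof. by rewrite norm2E sqrtr_ge0. Qed.

Lemma norm2_sq m n (A : 'M[R]_(m, n)) : norm2 A ^+ 2 = dotM A A.
Proof. by rewrite norm2E sqr_sqrtr // dotMM_ge0. Qed.

Lemma norm2_eq0 m n (A : 'M[R]_(m, n)) : norm2 A = 0 -> A = 0.
Proof. by move=> h; apply: dotMM_eq0; rewrite -norm2_sq h expr0n. Qed.

Lemma norm20 m n : norm2 (0 : 'M[R]_(m, n)) = 0.
Proof. by rewrite norm2E dotM0l sqrtr0. Qed.

Lemma CS m n (A B : 'M[R]_(m, n)) : dotM A B <= norm2 A * norm2 B.
Proof.
have [a0|a0] := eqVneq (norm2 A) 0.
  by rewrite (norm2_eq0 a0) dotM0l norm20 mul0r.
have [b0|b0] := eqVneq (norm2 B) 0.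
  by rewrite (norm2_eq0 b0) dotM0r norm20 mulr0.
set a := norm2 A; set b := norm2 B.
have ha : 0 < a by rewrite lt_def a0 norm2_ge0.
have hb : 0 < b by rewrite lt_def b0 norm2_ge0.
have := dotMM_ge0 (b *: A - a *: B).
rewrite !(dotMBl, dotMBr, dotMZl, dotMZr) -!norm2_sq (dotMC B A) -/a -/b.
move=> h.
have h2 : 0 <= 2 * (a * b) * (a * b - dotM A B) by nra.
have hab : 0 < 2 * (a * b) by nra.
rewrite -subr_ge0; move: h2; rewrite pmulr_rge0 //.
Qed.

Lemma CSabs m n (A B : 'M[R]_(m, n)) : `|dotM A B| <= norm2 A * norm2 B.
Proof.
rewrite ler_norml CS andbT -lerNl -dotMNl.
have -> : norm2 A = norm2 (- A) by rewrite !norm2E dotMNl dotMNr opprK.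
exact: CS.
Qed.

Lemma norm2N m n (A : 'M[R]_(m, n)) : norm2 (- A) = norm2 A.
Proof. by rewrite !norm2E dotMNl dotMNr opprK. Qed.

Lemma norm2B m n (A B : 'M[R]_(m, n)) : norm2 (A - B) = norm2 (B - A).
Proof. by rewrite -norm2N opprB. Qed.

Lemma norm2Z m n k (A : 'M[R]_(m, n)) : norm2 (k *: A) = `|k| * norm2 A.
Proof.
by rewrite !norm2E dotMZl dotMZr mulrA -expr2 sqrtrM ?sqr_ge0 // sqrtr_sqr.
Qed.

Lemma le_norm2 (x : R) m n (A : 'M[R]_(m, n)) :
  0 <= x -> dotM A A <= x ^+ 2 -> norm2 A <= x.
Proof.
move=> x0 h; rewrite -(ler_pXn2r (_ : (0 < 2)%N)) ?nnegrE ?norm2_ge0 //.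
by rewrite norm2_sq.
Qed.

Lemma norm2D m n (A B : 'M[R]_(m, n)) : norm2 (A + B) <= norm2 A + norm2 B.
Proof.
apply: le_norm2; first by rewrite addr_ge0 ?norm2_ge0.
rewrite dotMDl !dotMDr -!norm2_sq (dotMC B A).
have := CS A B; nra.
Qed.

Lemma norm2_sum m n I (r : seq I) (P : pred I) (F : I -> 'M[R]_(m, n)) :
  norm2 (\sum_(i <- r | P i) F i) <= \sum_(i <- r | P i) norm2 (F i).
Proof.
apply: (big_ind2 (fun a b => norm2 a <= b)); first by rewrite norm20.
  by move=> a b c e h1 h2; apply: le_trans (norm2D _ _) _; apply: lerD.
by [].
Qed.

Lemma norm2_tr m n (A : 'M[R]_(m, n)) : norm2 A^T = norm2 A.
Proof.
rewrite !norm2E /dotM exchange_big; congr Num.sqrt.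
by apply: eq_bigr => i _; apply: eq_bigr => j _; rewrite !mxE.
Qed.

Lemma dotM_row k (u v : 'rV[R]_k) : (u *m v^T) 0 0 = dotM u v.
Proof.
rewrite /dotM big_ord1 !mxE; apply: eq_bigr => j _; rewrite !mxE.
by rewrite (ord1 0).
Qed.

Lemma dotM_tr m n (A B : 'M[R]_(m, n)) : dotM A^T B^T = dotM A B.
Proof.
rewrite /dotM exchange_big.
by apply: eq_bigr => i _; apply: eq_bigr => j _; rewrite !mxE.
Qed.

Lemma CSsq m n (A B : 'M[R]_(m, n)) : dotM A B ^+ 2 <= dotM A A * dotM B B.
Proof.
rewrite -!norm2_sq -exprMn -real_normK ?num_real //.
by rewrite lerXn2r ?nnegrE ?normr_ge0 ?mulr_ge0 ?norm2_ge0 // CSabs.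
Qed.

Lemma norm2_mulmx k d (A : 'M[R]_(k, d)) (c : 'cV[R]_d) :
  norm2 (A *m c) <= norm2 A * norm2 c.
Proof.
apply: le_norm2; first by rewrite mulr_ge0 ?norm2_ge0.
rewrite exprMn !norm2_sq.
have e i : (A *m c) i 0 = dotM (row i A) c^T.
  rewrite mxE /dotM big_ord1; apply: eq_bigr => j _; by rewrite !mxE.
rewrite {1}/dotM; under eq_bigr do rewrite big_ord1 -expr2 e.
rewrite -(dotM_tr c c).
have -> : dotM A A = \sum_i dotM (row i A) (row i A).
  rewrite /dotM; apply: eq_bigr => i _; rewrite big_ord1.
  by apply: eq_bigr => j _; rewrite !mxE.
rewrite mulr_suml; apply: ler_sum => i _.
exact: CSsq.
Qed.


Lemma entry_subZ (A B : 'M[R]_1) k : (A - k *: B) 0 0 = A 0 0 - k * B 0 0.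
Proof. by rewrite !mxE. Qed.

Lemma qf_col d (H : 'M[R]_d) (c : 'cV[R]_d) : (c^T *m H *m c^T^T) 0 0 = dotM c (H *m c).
Proof.
by rewrite trmxK -mulmxA -[X in c^T *m X](trmxK (H *m c)) dotM_row dotM_tr.
Qed.

Lemma loewner_lb d (H : 'M[R]_d) mu : loewner_le mu%:M H ->
  forall u : 'rV[R]_d, mu * dotM u u <= (u *m H *m u^T) 0 0.
Proof.
move=> h u; have := h u.
rewrite mulmxBr mulmxBl mul_mx_scalar -scalemxAl entry_subZ (dotM_row u u).
by rewrite subr_ge0.
Qed.

Lemma loewner_ub d (H : 'M[R]_d) L : loewner_le H L%:M ->
  forall u : 'rV[R]_d, (u *m H *m u^T) 0 0 <= L * dotM u u.
Proof.
move=> h u; have := h u.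
rewrite mulmxBr mulmxBl mul_mx_scalar -scalemxAl.
have -> : (L *: (u *m u^T) - u *m H *m u^T) 0 0 = L * (u *m u^T) 0 0 - (u *m H *m u^T) 0 0.
  by rewrite !mxE.
by rewrite (dotM_row u u) subr_ge0.
Qed.

Lemma loewner_col d (H : 'M[R]_d) mu : loewner_le mu%:M H ->
  forall c : 'cV[R]_d, mu * dotM c c <= dotM c (H *m c).
Proof.
move=> h c; have := loewner_lb h c^T.
by rewrite qf_col dotM_tr.
Qed.

Lemma loewner_norm d (H : 'M[R]_d) mu : 0 < mu -> loewner_le mu%:M H ->
  forall c : 'cV[R]_d, mu * norm2 c <= norm2 (H *m c).
Proof.
move=> mu0 h c; have := loewner_col h c.
have := CS c (H *m c); rewrite -norm2_sq => h1 h2.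
have [c0|c0] := eqVneq (norm2 c) 0; first by rewrite c0 mulr0 norm2_ge0.
have cp : 0 < norm2 c by rewrite lt_def c0 norm2_ge0.
rewrite -(ler_pM2l cp); nra.
Qed.

Lemma loewner_unit d (H : 'M[R]_d) mu : 0 < mu -> loewner_le mu%:M H ->
  H \in unitmx.
Proof.
move=> mu0 h; rewrite unitmxE unitfE; apply/negP => /det0P [v v0 vH].
have := loewner_lb h v; rewrite vH mul0mx mxE => h1.
have h2 : dotM v v <= 0 by rewrite -(ler_pM2l mu0) mulr0.
have h3 : dotM v v = 0 by apply/eqP; rewrite eq_le h2 dotMM_ge0.
by move: v0; rewrite (dotMM_eq0 h3) eqxx.
Qed.

Lemma loewner_inv d (H : 'M[R]_d) mu : 0 < mu -> loewner_le mu%:M H ->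
  forall c : 'cV[R]_d, norm2 (invmx H *m c) <= mu^-1 * norm2 c.
Proof.
move=> mu0 h c; have := loewner_norm mu0 h (invmx H *m c).
rewrite mulmxA mulmxV ?mul1mx; last exact: loewner_unit h.
by move=> h1; rewrite -(ler_pM2l mu0) mulrA mulfV ?gt_eqF // mul1r.
Qed.

Lemma opnorm_bound d (A : 'M[R]_d) (c : 'cV[R]_d) :
  norm2 (A *m c) <= opnorm A * norm2 c.
Proof.
have [c0|c0] := eqVneq (norm2 c) 0.
  by rewrite (norm2_eq0 c0) mulmx0 norm20 mulr0.
have cp : 0 < norm2 c by rewrite lt_def c0 norm2_ge0.
pose v := (norm2 c)^-1 *: c.
have nv : norm2 v = 1 by rewrite norm2Z ger0_norm ?invr_ge0 ?norm2_ge0 // mulVf.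
have hs : has_sup [set norm2 (A *m v) | v in [set v : 'cV[R]_d | norm2 v = 1]].
  split; first by exists (norm2 (A *m v)); exists v.
  exists (norm2 A) => _ [w /= w1 <-].
  by have := norm2_mulmx A w; rewrite w1 mulr1.
have := sup_upper_bound hs; move=> /(_ (norm2 (A *m v))) /= h.
have {}h : norm2 (A *m v) <= opnorm A by apply: h; exists v.
move: h; rewrite -scalemxAr norm2Z ger0_norm ?invr_ge0 ?norm2_ge0 //.
by rewrite -(ler_pM2l cp) mulrA mulfV ?gt_eqF // mul1r mulrC.
Qed.

End Norms.

Section Calc.
Variable R : realType.

Lemma d_grad d (f : 'rV[R]_d -> R) p v :
  'd f p v = dotM (grad f p) v.
Proof.
rewrite {1}(row_sum_delta v) linear_sum /dotM big_ord1.
apply: eq_bigr => j _; rewrite linearZ /= !mxE mulrC.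
by rewrite (ord1 0).
Qed.

Lemma d_gradf d (f : 'rV[R]_d -> R) p v :
  'd (grad f) p v = v *m hess f p.
Proof.
apply/matrixP => i j; rewrite (ord1 i) {1}(row_sum_delta v) linear_sum.
rewrite summxE !mxE; apply: eq_bigr => k _.
by rewrite linearZ /= !mxE.
Qed.

Lemma is_derive_line (W : normedModType R) d (F : 'rV[R]_d -> W) (z v : 'rV[R]_d) (t : R) :
  (forall p, differentiable F p) ->
  is_derive t 1 (fun s => F (z + s *: v)) ('d F (z + t *: v) v).
Proof.
move=> dF.
have e : (fun h : R => h^-1 *: (((fun s => F (z + s *: v)) \o shift t) (h *: (1:R)) - F (z + t *: v)))
   = (fun h : R => h^-1 *: ((F \o shift (z + t *: v)) (h *: v) - F (z + t *: v))).
  apply/funext => h /=; congr (_ *: (F _ - _)).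
  by rewrite [h *: 1]mulr1 scalerDl addrCA addrA.
apply: DeriveDef.
  rewrite /derivable e.
  exact: (diff_derivable (dF (z + t *: v))).
rewrite -(deriveE v (dF (z + t *: v))).
by rewrite /derive e.
Qed.

Lemma is_derive_coord m n (Phi : R -> 'M[R]_(m, n)) DPhi (t : R) i j :
  is_derive t 1 Phi DPhi -> is_derive t 1 (fun s => Phi s i j) (DPhi i j).
Proof.
move=> h; have dP : derivable Phi t 1 by case: h.
apply: DeriveDef; first exact: (proj1 (derivable_mxP _ _ _) dP i j).
have dv : 'D_1 Phi t = DPhi by case: h.
by rewrite -dv derive_mx // mxE.
Qed.

Lemma is_derive_dotM m n (Phi : R -> 'M[R]_(m, n)) DPhi (t : R) B :
  is_derive t 1 Phi DPhi -> is_derive t 1 (fun s => dotM (Phi s) B) (dotM DPhi B).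
Proof.
move=> h.
have e : (fun s => dotM (Phi s) B) =
   \sum_(i < m) \sum_(j < n) (B i j \*: (fun s => Phi s i j)).
  apply/funext => s; rewrite /dotM !fct_sumE; apply: eq_bigr => i _.
  rewrite !fct_sumE; apply: eq_bigr => j _; by rewrite /= mulrC.
rewrite e /dotM; apply: is_derive_sum => i; apply: is_derive_sum => j.
rewrite mulrC; apply: is_deriveZ; exact: is_derive_coord.
Qed.


Lemma cont_of_derive (g dg : R -> R) (a b : R) :
  (forall t : R, is_derive t 1 g (dg t)) -> {within `[a, b], continuous g}.
Proof.
move=> h; apply: derivable_within_continuous => x _.
by have [] := h x.
Qed.

Lemma taylor1D (phi psi Q : R -> R) (c : R) :
  (forall t : R, is_derive t 1 phi (psi t)) ->
  (forall t : R, is_derive t 1 psi (Q t)) ->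
  (forall t, c <= Q t) ->
  c / 2 <= phi 1 - phi 0 - psi 0.
Proof.
move=> hphi hpsi hQ.
have step1 : forall t, 0 < t -> c * t <= psi t - psi 0.
  move=> t t0.
  have [xi _ ->] := MVT t0 (fun x _ => hpsi x) (cont_of_derive hpsi).
  by rewrite subr0 ler_pM2r.
pose rho := phi - (psi 0) \*: (@id R) - (c / 2) \*: ((@id R) * (@id R)).
have hrho : forall t : R, is_derive t 1 rho (psi t - psi 0 - c * t).
  move=> t.
  have h1 : is_derive t 1 (@id R) 1 := is_derive_id t 1.
  have h2 : is_derive t 1 ((@id R) * (@id R)) (t *: 1 + t *: 1) := is_deriveM h1 h1.
  have h3 := is_deriveZ (psi 0) h1.
  have h4 := is_deriveZ (c / 2) h2.
  have h5 := is_deriveB (is_deriveB (hphi t) h3) h4.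
  suff E : psi t - (psi 0)%:A - (c / 2) *: (t%:A + t%:A) = psi t - psi 0 - c * t.
    by rewrite -E; exact: h5.
  by rewrite /GRing.scale /= !mulr1; field.
have [xi xi01 E] := MVT ltr01 (fun x _ => hrho x) (cont_of_derive hrho).
have xi0 : 0 < xi by move: xi01; rewrite in_itv /= => /andP[].
have := step1 xi xi0.
have r : forall s, rho s = phi s - psi 0 * s - c / 2 * (s * s) by [].
move: E; rewrite !r subr0 !mulr1 ?mulr0 ?mul0r ?subr0 => E h.
lra.
Qed.


Lemma taylor_lb d (f : 'rV[R]_d -> R) mu :
  twice_differentiable f -> (forall x, loewner_le mu%:M (hess f x)) ->
  forall z w, mu / 2 * dotM (w - z) (w - z) <= f w - f z - dotM (grad f z) (w - z).
Proof.
move=> df hmu z w; set v := w - z.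
pose phi := fun s : R => f (z + s *: v).
pose psi := fun s : R => dotM (grad f (z + s *: v)) v.
pose Q := fun s : R => dotM (v *m hess f (z + s *: v)) v.
have hphi : forall t : R, is_derive t 1 phi (psi t).
  move=> t; have := @is_derive_line _ d f z v t (fun p => (df p).1).
  by rewrite d_grad.
have hpsi : forall t : R, is_derive t 1 psi (Q t).
  move=> t; have := @is_derive_line _ d (grad f) z v t (fun p => (df p).2).
  rewrite d_gradf => h; exact: (is_derive_dotM v h).
have hQ : forall t, mu * dotM v v <= Q t.
  by move=> t; have := loewner_lb (hmu (z + t *: v)) v; rewrite dotM_row.
have := taylor1D hphi hpsi hQ.
have ew : z + v = w by rewrite /v addrC subrK.
by rewrite /phi /psi scale1r scale0r addr0 ew mulrAC.
Qed.

Lemma taylor_ub d (f : 'rV[R]_d -> R) L :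
  twice_differentiable f -> (forall x, loewner_le (hess f x) L%:M) ->
  forall z w, f w - f z - dotM (grad f z) (w - z) <= L / 2 * dotM (w - z) (w - z).
Proof.
move=> df hL z w; set v := w - z.
pose phi := fun s : R => f (z + s *: v).
pose psi := fun s : R => dotM (grad f (z + s *: v)) v.
pose Q := fun s : R => dotM (v *m hess f (z + s *: v)) v.
have hphi : forall t : R, is_derive t 1 (- phi) (- psi t).
  move=> t; have := @is_derive_line _ d f z v t (fun p => (df p).1).
  rewrite d_grad => h; exact: is_deriveN.
have hpsi : forall t : R, is_derive t 1 (- psi) (- Q t).
  move=> t; have := @is_derive_line _ d (grad f) z v t (fun p => (df p).2).
  rewrite d_gradf => h; exact: is_deriveN (is_derive_dotM v h).
have hQ : forall t, - (L * dotM v v) <= - Q t.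
  by move=> t; have := loewner_ub (hL (z + t *: v)) v; rewrite dotM_row lerN2.
have := taylor1D hphi hpsi hQ.
have r1 : forall s, (- phi) s = - phi s by [].
have ew : z + v = w by rewrite /v addrC subrK.
rewrite !r1 /phi /psi scale1r scale0r addr0 ew.
move=> h; rewrite -mulrA mulrC; lra.
Qed.


Lemma d_comb (W : normedModType R) d n (G : 'I_n -> 'rV[R]_d -> W) (b : 'I_n -> R) p :
  (forall i, differentiable (G i) p) ->
  differentiable (\sum_i b i \*: G i) p /\
  forall v, 'd (\sum_i b i \*: G i) p v = \sum_i b i *: 'd (G i) p v.
Proof.
move=> dG.
have dZ : forall i, differentiable (b i \*: G i) p.
  by move=> i; apply: differentiableZ.
have dS := differentiable_sum dZ.
split => // v.
rewrite -deriveE // derive_sum; last by move=> i; apply: diff_derivable.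
apply: eq_bigr => i _; rewrite deriveZ ?deriveE //.
exact: diff_derivable.
Qed.

Lemma fbetaE n d (f : 'I_n -> 'rV[R]_d -> R) b :
  fbeta f b = \sum_i b i \*: f i.
Proof. by apply/funext => x; rewrite fct_sumE. Qed.

Lemma grad_fbeta n d (f : 'I_n -> 'rV[R]_d -> R) b p :
  (forall i, differentiable (f i) p) ->
  grad (fbeta f b) p = \sum_i b i *: grad (f i) p.
Proof.
move=> df; have [_ h] := d_comb b df.
apply/matrixP => i j; rewrite fbetaE !mxE h summxE; apply: eq_bigr => k _.
by rewrite !mxE.
Qed.

Lemma grad_fbetaF n d (f : 'I_n -> 'rV[R]_d -> R) b :
  (forall i, twice_differentiable (f i)) ->
  grad (fbeta f b) = \sum_i b i \*: grad (f i).
Proof.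
move=> df; apply/funext => p; rewrite grad_fbeta; last by move=> i; case: (df i p).
by rewrite fct_sumE.
Qed.

Lemma fbeta_twice n d (f : 'I_n -> 'rV[R]_d -> R) b :
  (forall i, twice_differentiable (f i)) -> twice_differentiable (fbeta f b).
Proof.
move=> df p; split.
  rewrite fbetaE; have [] := @d_comb _ d n f b p (fun i => (df i p).1) => //.
rewrite grad_fbetaF //; have [] := @d_comb _ d n (fun i => grad (f i)) b p (fun i => (df i p).2) => //.
Qed.

Lemma hess_fbeta n d (f : 'I_n -> 'rV[R]_d -> R) b p :
  (forall i, twice_differentiable (f i)) ->
  hess (fbeta f b) p = \sum_i b i *: hess (f i) p.
Proof.
move=> df.
have h : forall v, 'd (\sum_i b i \*: grad (f i)) p v = \sum_i b i *: 'd (grad (f i)) p v.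
  exact: (@d_comb _ d n (fun i => grad (f i)) b p (fun i => (df i p).2)).2.
have E := grad_fbetaF b df.
apply/matrixP => j k; rewrite /hess E mxE.
transitivity ((\sum_i b i *: 'd (grad (f i)) p 'e_j) 0 k).
  exact: (congr1 (fun M : 'rV[R]_d => M 0 k) (h 'e_j)).
rewrite !summxE; apply: eq_bigr => i _; by rewrite !mxE.
Qed.

Lemma loewner_comb_lb d n (H : 'I_n -> 'M[R]_d) b mu :
  (forall i, 0 <= b i) -> \sum_i b i = 1 ->
  (forall i, loewner_le mu%:M (H i)) -> loewner_le mu%:M (\sum_i b i *: H i).
Proof.
move=> b0 b1 hH u.
have E : \sum_i b i *: H i - mu%:M = \sum_i b i *: (H i - mu%:M).
  have E1 : \sum_i b i *: (H i - mu%:M) = \sum_i (b i *: H i - b i *: mu%:M).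
    by apply: eq_bigr => i _; rewrite scalerBr.
  have E2 : \sum_i b i *: (mu%:M : 'M[R]_d) = mu%:M by rewrite -scaler_suml b1 scale1r.
  by rewrite E1 sumrB E2.
rewrite E mulmx_sumr mulmx_suml summxE; apply: sumr_ge0 => i _.
rewrite -scalemxAr -scalemxAl mxE. apply: mulr_ge0; first exact: b0.
exact: hH.
Qed.

Lemma loewner_comb_ub d n (H : 'I_n -> 'M[R]_d) b L :
  (forall i, 0 <= b i) -> \sum_i b i = 1 ->
  (forall i, loewner_le (H i) L%:M) -> loewner_le (\sum_i b i *: H i) L%:M.
Proof.
move=> b0 b1 hH u.
have E : L%:M - \sum_i b i *: H i = \sum_i b i *: (L%:M - H i).
  have E1 : \sum_i b i *: (L%:M - H i) = \sum_i (b i *: L%:M - b i *: H i).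
    by apply: eq_bigr => i _; rewrite scalerBr.
  have E2 : \sum_i b i *: (L%:M : 'M[R]_d) = L%:M by rewrite -scaler_suml b1 scale1r.
  by rewrite E1 sumrB E2.
rewrite E mulmx_sumr mulmx_suml summxE; apply: sumr_ge0 => i _.
rewrite -scalemxAr -scalemxAl mxE. apply: mulr_ge0; first exact: b0.
exact: hH.
Qed.

End Calc.

Section Convex.
Variable R : realType.
Variable d : nat.
Variables (f : 'rV[R]_d -> R) (g : 'rV[R]_d -> 'rV[R]_d).

Definition LBp (m : R) := forall z w, m / 2 * dotM (w - z) (w - z) <= f w - f z - dotM (g z) (w - z).
Definition UBp (L : R) := forall z w, f w - f z - dotM (g z) (w - z) <= L / 2 * dotM (w - z) (w - z).

Lemma min_grad0 L p : 0 < L -> UBp L -> (forall y, f p <= f y) -> g p = 0.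
Proof.
move=> L0 hU hmin.
have := hU p (p - L^-1 *: g p).
have e : p - L^-1 *: g p - p = - (L^-1 *: g p) by rewrite addrC addKr.
rewrite e dotMNr dotMNl dotMNr opprK dotMZr dotMZl dotMZr.
have := hmin (p - L^-1 *: g p).
set G := dotM (g p) (g p); set fw := f _.
move=> h1 h2.
have G0 : 0 <= G := dotMM_ge0 (g p).
have hG : G <= 0.
  have hL : 0 < L^-1 by rewrite invr_gt0.
  have : L^-1 * G <= L / 2 * (L^-1 * (L^-1 * G)) by nra.
  have e3 : L / 2 * (L^-1 * (L^-1 * G)) = L^-1 / 2 * G by field; rewrite gt_eqF.
  rewrite e3 => h3; nra.
apply: dotMM_eq0; apply/eqP; rewrite eq_le hG G0 //.
Qed.

Lemma strong_mono m x y : LBp m ->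
  m * dotM (y - x) (y - x) <= dotM (g y - g x) (y - x).
Proof.
move=> hL; have h1 := hL x y; have h2 := hL y x.
have e1 : x - y = - (y - x) by rewrite opprB.
move: h2; rewrite e1 dotMNl dotMNr opprK dotMNr => h2.
rewrite dotMBl; lra.
Qed.

Lemma strong_mono_norm m x y : 0 <= m -> LBp m ->
  m * norm2 (y - x) <= norm2 (g y - g x).
Proof.
move=> m0 hL; have h := strong_mono x y hL.
have cs := CS (g y - g x) (y - x).
rewrite -norm2_sq in h.
have [n0|n0] := eqVneq (norm2 (y - x)) 0; first by rewrite n0 mulr0 norm2_ge0.
have np : 0 < norm2 (y - x) by rewrite lt_def n0 norm2_ge0.
rewrite -(ler_pM2r np); nra.
Qed.

Lemma cocoercive L x y : 0 < L -> LBp 0 -> UBp L ->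
  L^-1 / 2 * dotM (g y - g x) (g y - g x) <= f y - f x - dotM (g x) (y - x).
Proof.
move=> L0 hL hU.
set D := g y - g x. set u := y - x.
set w := y - L^-1 *: D.
have h1 := hL x w.
have h2 := hU y w.
have ew1 : w - x = u - L^-1 *: D by rewrite /w /u addrAC.
have ew2 : w - y = - (L^-1 *: D) by rewrite /w addrC addKr.
have e1 : dotM (g x) (w - x) = dotM (g x) u - L^-1 * dotM (g x) D.
  by rewrite ew1 dotMBr dotMZr.
have e2 : dotM (g y) (w - y) = - (L^-1 * dotM (g y) D).
  by rewrite ew2 dotMNr dotMZr.
have e3 : L / 2 * dotM (w - y) (w - y) = L^-1 / 2 * dotM D D.
  rewrite ew2 dotMNr dotMNl opprK dotMZr dotMZl.
  by field; rewrite gt_eqF.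
have e4 : dotM (g y) D = dotM (g x) D + dotM D D.
  by rewrite {3}/D dotMBl addrC subrK.
rewrite e1 in h1; rewrite e2 e3 e4 mulrDr in h2.
rewrite mul0r mul0r in h1.
have e5 : L^-1 / 2 * dotM D D = (L^-1 * dotM D D) / 2 by rewrite mulrAC.
rewrite e5 in h2 *.
lra.
Qed.

Lemma lipschitz L x y : 0 < L -> LBp 0 -> UBp L ->
  norm2 (g y - g x) <= L * norm2 (y - x).
Proof.
move=> L0 hL hU.
have h1 := cocoercive x y L0 hL hU.
have h2 := cocoercive y x L0 hL hU.
set D := g y - g x in h1 h2 *. set u := y - x in h1 h2 *.
have e1 : dotM (g x - g y) (g x - g y) = dotM D D.
  by rewrite -opprB dotMNl dotMNr opprK.
have e2 : dotM (g y) (x - y) = - dotM (g y) u.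
  by rewrite -opprB dotMNr.
have e3 : dotM D u = dotM (g y) u - dotM (g x) u by rewrite dotMBl.
rewrite e1 e2 in h2.
have hs : L^-1 * dotM D D <= dotM D u.
  have e5 : L^-1 / 2 * dotM D D = (L^-1 * dotM D D) / 2 by rewrite mulrAC.
  rewrite e5 in h1 h2; rewrite e3; lra.
have cs := CS D u.
rewrite -norm2_sq in hs.
have [n0|n0] := eqVneq (norm2 D) 0.
  by rewrite n0; apply: mulr_ge0; [apply: ltW | apply: norm2_ge0].
have np : 0 < norm2 D by rewrite lt_def n0 norm2_ge0.
have hL' : 0 < L^-1 by rewrite invr_gt0.
have : L^-1 * norm2 D <= norm2 u.
  rewrite -(ler_pM2r np); nra.
by rewrite -(ler_pM2l L0) mulrA mulfV ?gt_eqF // mul1r.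
Qed.

End Convex.

Section Aux.
Variable R : realType.

Lemma LB_weaken d (f : 'rV[R]_d -> R) g m : 0 <= m -> LBp f g m -> LBp f g 0.
Proof.
move=> m0 h z w; apply: le_trans (h z w); rewrite mul0r mul0r.
by apply: mulr_ge0; [apply: divr_ge0 | apply: dotMM_ge0].
Qed.

Lemma coord_le_norm2 d (A : 'rV[R]_d) j : `|A 0 j| <= norm2 A.
Proof.
rewrite -(ler_pXn2r (_ : (0 < 2)%N)) ?nnegrE ?norm2_ge0 ?normr_ge0 //.
rewrite norm2_sq (real_normK (num_real _)) /dotM big_ord1 (bigD1 j) //= -expr2.
by rewrite lerDl; apply: sumr_ge0 => k _; rewrite -expr2 sqr_ge0.
Qed.

Lemma norm2_comb a b n (v : 'I_n -> 'M[R]_(a, b)) (z : 'I_n -> R) B :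
  (forall i, norm2 (v i) <= B) -> norm2 (\sum_i z i *: v i) <= (\sum_i `|z i|) * B.
Proof.
move=> hB; apply: le_trans (norm2_sum _ _ _) _; rewrite mulr_suml.
apply: ler_sum => i _; rewrite norm2Z; apply: ler_wpM2l => //.
Qed.

Lemma exists_min d (h : 'rV[R]_d -> R) gh mu : 0 < mu ->
  (forall p, differentiable h p) -> LBp h gh mu -> exists c, forall y, h c <= h y.
Proof.
move=> mu0 dh hL.
pose x0 : 'rV[R]_d := 0.
pose r := 2 * norm2 (gh x0) / mu.
have r0 : 0 <= r by rewrite /r divr_ge0 ?mulr_ge0 ?norm2_ge0 // ltW.
pose A := [set v : 'rV[R]_d | forall j, `[- r, r]%classic (v ord0 j)].
have cA : compact A.
  apply: (@rV_compact _ _ (fun j => `[- r, r]%classic)).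
  move=> j; exact: segment_compact.
have A0 : A !=set0.
  by exists x0 => j /=; rewrite in_itv /= mxE oppr_le0 r0.
have ch : {within A, continuous h}.
  apply: continuous_subspaceT => p; exact: differentiable_continuous.
have [c cA' hc] := compact_EVT_min A0 cA ch.
exists c => y.
have x0A : x0 \in A.
  by apply: mem_set => j /=; rewrite in_itv /= mxE oppr_le0 r0.
have hcx0 : h c <= h x0 := hc x0 x0A.
have [yA|yA] := pselect (A y); first exact: hc y (mem_set yA).
apply: le_trans hcx0 _.
have [j hj] : exists j, ~ `[- r, r]%classic (y ord0 j).
  apply/existsNP => H; apply: yA => j; exact: H j.
have hrj : r <= `|(y - x0) 0 j|.
  move: hj => /=; rewrite in_itv /= !mxE subr0 (ord1 0).
  move=> H; rewrite ler_normr; apply/orP.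
  have [ha|ha] := lerP (y ord0 j) r.
    right; have : ~~ (- r <= y ord0 j) by apply/negP => hh; apply: H; rewrite hh ha.
    by rewrite -ltNge => h'; rewrite lerNr ltW.
  by left; rewrite ltW.
have hrho : r <= norm2 (y - x0) := le_trans hrj (coord_le_norm2 _ _).
have hr : 2 * norm2 (gh x0) <= norm2 (y - x0) * mu.
  by move: hrho; rewrite /r ler_pdivrMr.
have := hL x0 y.
have cs := CSabs (gh x0) (y - x0).
rewrite -norm2_sq.
have rho0 : 0 <= norm2 (y - x0) by rewrite norm2_ge0.
set rho := norm2 (y - x0) in hr cs rho0 *.
set ng := norm2 (gh x0) in cs hr *.
move=> hl.
have hq : ng * rho <= mu / 2 * rho ^+ 2 by nra.
have := ler_norml (dotM (gh x0) (y - x0)) (ng * rho); rewrite cs => /esym /andP [h3 _].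
lra.
Qed.

End Aux.

Lemma norm2_dim0 (R : realType) m n (A : 'M[R]_(m, n)) : (m = 0 \/ n = 0)%N -> norm2 A = 0.
Proof.
move=> h; rewrite norm2E /dotM.
case: h => h0.
  by rewrite big1 ?sqrtr0 // => i _; exfalso; case: i => i hi; move: hi; rewrite h0.
rewrite big1 ?sqrtr0 // => i _; rewrite big1 // => j _.
by exfalso; case: j => j hj; move: hj; rewrite h0.
Qed.

Lemma jacT (R : realType) n d (f : 'I_n -> 'rV[R]_d -> R) p (z : 'cV[R]_n) :
  (Defs.jacobian f p)^T *m z = (\sum_i z i 0 *: grad (f i) p)^T.
Proof.
apply/matrixP => j k; rewrite (ord1 k) !mxE summxE; apply: eq_bigr => i _.
by rewrite !mxE mulrC.
Qed.

Lemma mx_decomp (R : realType) d (P Q : 'M[R]_d) (a b : 'cV[R]_d) :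
  P \in unitmx -> Q \in unitmx ->
  invmx P *m a - invmx Q *m b = invmx P *m (a - b + (Q - P) *m (invmx Q *m b)).
Proof.
move=> uP uQ; rewrite mulmxDr mulmxBl !mulmxBr (mulKVmx uQ) (mulKmx uP).
by rewrite addrA subrK.
Qed.

Lemma mx_neg (R : realType) d n (P Q : 'M[R]_d) (JP JQ : 'M[R]_(d, n)) (z : 'cV[R]_n) :
  (- (invmx Q *m JQ) - - (invmx P *m JP)) *m z = invmx P *m (JP *m z) - invmx Q *m (JQ *m z).
Proof. by rewrite mulmxBl !mulNmx opprK addrC -!mulmxA. Qed.

Lemma EMgen (R : realType) n d (f : 'I_n -> 'rV[R]_d -> R) b x xb (z : 'cV[R]_n) :
  (grad_xstar f b xb - grad_xstar_hat f x b) *m z =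
  invmx (hess (fbeta f b) x) *m ((\sum_i z i 0 *: grad (f i) x)^T)
  - invmx (hess (fbeta f b) xb) *m ((\sum_i z i 0 *: grad (f i) xb)^T).
Proof.
rewrite /grad_xstar /grad_xstar_hat mx_neg.
exact: (congr2 (fun u v => invmx (hess (fbeta f b) x) *m u - invmx (hess (fbeta f b) xb) *m v) (jacT f x z) (jacT f xb z)).
Qed.

Unset Implicit Arguments.

Theorem lemma3 (R : realType) (n d : nat) (f : 'I_n -> 'rV[R]_d -> R)
  (mu L LH : R)
  (hmu : 0 < mu) (hmuL : mu <= L)
  (A1d : forall i, twice_differentiable (f i))
  (A1l : forall i x, loewner_le (mu%:M) (hess (f i) x))
  (A1u : forall i x, loewner_le (hess (f i) x) (L%:M))
  (A2 : forall i x y, opnorm (hess (f i) x - hess (f i) y) <= LH * norm2 (x - y))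
  (x : 'rV[R]_d) (beta : 'I_n -> R) (hbeta : simplex beta)
  (xb : 'rV[R]_d) (hxb : forall y, fbeta f beta xb <= fbeta f beta y) :
  let kappa := L / mu in
  let Rd := diam2 (pareto_set f) in
  norm12 (grad_xstar f beta xb - grad_xstar_hat f x beta)
    <= mu^-1 * (kappa * (1 + LH * Rd / mu)) * norm2 (grad (fbeta f beta) x).
Proof.
cbv zeta; set kappa := L / mu; set Rd := diam2 (pareto_set f).
have [hb0 hb1] := hbeta.
have npos : (0 < n)%N.
  case: (posnP n) => // n0; move: hb1; rewrite big1 => [/esym/eqP|i _].
    by rewrite oner_eq0.
  by exfalso; case: i => i hi; move: hi; rewrite n0.
pose i0 : 'I_n := Ordinal npos.
pose z0 : 'cV[R]_n := delta_mx i0 0.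
have z0n : norm1 z0 = 1.
  rewrite /norm1 (bigD1 i0) //= big1 ?addr0 => [|i ii0]; first by rewrite mxE !eqxx normr1.
  by rewrite mxE (negbTE ii0) normr0.
have Sne : [set norm2 ((grad_xstar f beta xb - grad_xstar_hat f x beta) *m z) | z in [set z : 'cV[R]_n | norm1 z = 1]] !=set0.
  by exists (norm2 ((grad_xstar f beta xb - grad_xstar_hat f x beta) *m z0)); exists z0.
have [d0|dpos] := posnP d.
  rewrite (@norm2_dim0 _ 1 d); last by right.
  rewrite mulr0; apply: ge_sup => // _ [z _ <-].
  by rewrite norm2_dim0 //; left.
have L0 : 0 < L := lt_le_trans hmu hmuL.
have LBi : forall i, LBp (f i) (grad (f i)) mu := fun i => taylor_lb (A1d i) (A1l i).
have UBi : forall i, UBp (f i) (grad (f i)) L := fun i => taylor_ub (A1d i) (A1u i).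
have LB0i : forall i, LBp (f i) (grad (f i)) 0 := fun i => LB_weaken (ltW hmu) (LBi i).
have lip : forall i y z, norm2 (grad (f i) y - grad (f i) z) <= L * norm2 (y - z).
  by move=> i y z; apply: lipschitz L0 (LB0i i) (UBi i).
have fbLB : forall b, simplex b -> LBp (fbeta f b) (grad (fbeta f b)) mu.
  move=> b [b0 b1]; apply: taylor_lb; first exact: fbeta_twice.
  by move=> p; rewrite hess_fbeta //; apply: loewner_comb_lb.
have fbUB : forall b, simplex b -> UBp (fbeta f b) (grad (fbeta f b)) L.
  move=> b [b0 b1]; apply: taylor_ub; first exact: fbeta_twice.
  by move=> p; rewrite hess_fbeta //; apply: loewner_comb_ub.
have gb0 : grad (fbeta f beta) xb = 0 := min_grad0 L0 (fbUB beta hbeta) hxb.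
have hxxb : mu * norm2 (x - xb) <= norm2 (grad (fbeta f beta) x).
  have := strong_mono_norm xb x (ltW hmu) (fbLB beta hbeta).
  by rewrite gb0 subr0.
have pmin : forall i, exists p, grad (f i) p = 0 /\ pareto_set f p.
  move=> i; have [c hc] := exists_min hmu (fun p => (A1d i p).1) (LBi i).
  have g0 : grad (f i) c = 0 := min_grad0 L0 (UBi i) hc.
  exists c; split => //.
  exists (fun j => (j == i)%:R); split.
    split; first by move=> j; rewrite ler0n.
    rewrite (bigD1 i) //= eqxx big1 ?addr0 // => j /negbTE ->.
    by [].
  have -> : fbeta f (fun j => (j == i)%:R) = f i.
    apply/funext => y; rewrite /fbeta (bigD1 i) //= eqxx mul1r big1 ?addr0 //.
    by move=> j /negbTE ->; rewrite mul0r.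
  exact: g0.
have xbP : pareto_set f xb by exists beta.
pose C := \sum_i norm2 (grad (f i) xb).
have bnd : forall q, pareto_set f q -> norm2 (q - xb) <= C / mu.
  move=> q [b [hb gq]]; have [b0 b1] := hb.
  have := strong_mono_norm xb q (ltW hmu) (fbLB b hb).
  rewrite gq sub0r norm2N grad_fbeta; last by move=> i; case: (A1d i xb).
  move=> h; rewrite ler_pdivlMr // mulrC; apply: le_trans h _.
  apply: le_trans (norm2_sum _ _ _) _; apply: ler_sum => i _.
  rewrite norm2Z ger0_norm; last exact: b0.
  apply: ler_piMl; first exact: norm2_ge0.
  have : b i <= \sum_j b j.
    rewrite (bigD1 i) //= lerDl; apply: sumr_ge0 => j _; exact: b0.
  by rewrite b1.
have hsup : has_sup [set norm2 (x1 - y1) | x1 in pareto_set f & y1 in pareto_set f].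
  split; first by exists (norm2 (xb - xb)); exists xb => //; exists xb.
  exists (C / mu + C / mu) => _ [x1 x1P [y1 y1P <-]].
  have -> : x1 - y1 = (x1 - xb) + (xb - y1) by rewrite addrA subrK.
  apply: le_trans (norm2D _ _) _; apply: lerD; first exact: bnd.
  by rewrite norm2B; apply: bnd.
have inS : forall x1 y1, pareto_set f x1 -> pareto_set f y1 -> norm2 (x1 - y1) <= Rd.
  move=> x1 y1 h1 h2; rewrite /Rd /diam2; apply: sup_upper_bound => //.
  by exists x1 => //; exists y1.
have Rd0 : 0 <= Rd := le_trans (norm2_ge0 _) (inS xb xb xbP xbP).
have gxb : forall i, norm2 (grad (f i) xb) <= L * Rd.
  move=> i; have [p [gp pP]] := pmin i.
  have -> : grad (f i) xb = grad (f i) xb - grad (f i) p by rewrite gp subr0.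
  apply: le_trans (lip i xb p) _; apply: ler_wpM2l; first exact: ltW.
  exact: inS.
have LH0 : 0 <= LH.
  pose j0 : 'I_d := Ordinal dpos.
  pose e0 : 'rV[R]_d := delta_mx 0 j0.
  pose c0 : 'cV[R]_d := delta_mx j0 0.
  have nz : forall m k (A : 'M[R]_(m, k)) i j, A i j = 1 -> 0 < norm2 A.
    move=> m k A i j hA; rewrite lt_def norm2_ge0 andbT; apply/eqP => /norm2_eq0 A0.
    by move: hA; rewrite A0 mxE => /eqP; rewrite eq_sym oner_eq0.
  have ne0 : 0 < norm2 (0 - e0).
    by rewrite sub0r norm2N; apply: (nz _ _ _ 0 j0); rewrite mxE !eqxx.
  have nc0 : 0 < norm2 c0 by apply: (nz _ _ _ j0 0); rewrite mxE !eqxx.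
  set A := hess (f i0) 0 - hess (f i0) e0.
  have h1 := opnorm_bound A c0.
  have h2 := A2 i0 0 e0.
  have op0 : 0 <= opnorm A.
    have : 0 <= opnorm A * norm2 c0 := le_trans (norm2_ge0 _) h1.
    by rewrite pmulr_lge0.
  have : 0 <= LH * norm2 (0 - e0) := le_trans op0 h2.
  by rewrite pmulr_lge0.
pose Hx := hess (fbeta f beta) x.
pose Hb := hess (fbeta f beta) xb.
have hLx : loewner_le mu%:M Hx.
  rewrite /Hx (hess_fbeta beta x A1d).
  exact: (loewner_comb_lb hb0 hb1 (fun i => A1l i x)).
have hLb : loewner_le mu%:M Hb.
  rewrite /Hb (hess_fbeta beta xb A1d).
  exact: (loewner_comb_lb hb0 hb1 (fun i => A1l i xb)).
have uHx : Hx \in unitmx := loewner_unit hmu hLx.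
have uHb : Hb \in unitmx := loewner_unit hmu hLb.
set e := norm2 (x - xb).
have e0 : 0 <= e := norm2_ge0 _.
have hdiff : forall c : 'cV[R]_d, norm2 ((Hb - Hx) *m c) <= LH * e * norm2 c.
  move=> c.
  have E : Hb - Hx = \sum_i beta i *: (hess (f i) xb - hess (f i) x).
    rewrite /Hb /Hx (hess_fbeta beta xb A1d) (hess_fbeta beta x A1d) -sumrB.
    by apply: eq_bigr => i _; rewrite scalerBr.
  rewrite E mulmx_suml; apply: le_trans (norm2_sum _ _ _) _.
  have E2 : LH * e * norm2 c = \sum_i beta i * (LH * e * norm2 c).
    by rewrite -mulr_suml hb1 mul1r.
  rewrite E2; apply: ler_sum => i _.
  rewrite -scalemxAl norm2Z ger0_norm; last exact: hb0.
  apply: ler_wpM2l; first exact: hb0.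
  apply: le_trans (opnorm_bound _ c) _; apply: ler_wpM2r; first exact: norm2_ge0.
  by rewrite /e norm2B; apply: A2.
have key : forall z : 'cV[R]_n, norm1 z = 1 ->
    norm2 ((grad_xstar f beta xb - grad_xstar_hat f x beta) *m z)
      <= mu^-1 * (L * e + LH * e * (mu^-1 * (L * Rd))).
  move=> z hz.
  pose a := (\sum_i z i 0 *: grad (f i) x)^T.
  pose b := (\sum_i z i 0 *: grad (f i) xb)^T.
  have E1 := EMgen f beta x xb z.
  have E2 := mx_decomp a b uHx uHb.
  have EE := congr1 (@norm2 R d 1) (etrans E1 E2); rewrite EE.
  apply: le_trans (loewner_inv hmu hLx _) _.
  have mi0 : 0 <= mu^-1 by rewrite invr_ge0 ltW.
  apply: ler_wpM2l => //.
  apply: le_trans (norm2D _ _) _; apply: lerD.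
    have Eab : a - b = (\sum_i z i 0 *: (grad (f i) x - grad (f i) xb))^T.
      rewrite /a /b -linearB /= -sumrB; congr (_^T).
      by apply: eq_bigr => i _; rewrite scalerBr.
    have EE2 := congr1 (@norm2 R d 1) Eab; rewrite EE2.
    rewrite norm2_tr; apply: le_trans (norm2_comb _ (fun i => lip i x xb)) _.
    by rewrite -/(norm1 z) hz mul1r.
  apply: le_trans (hdiff _) _.
  have LHe : 0 <= LH * e by apply: mulr_ge0.
  apply: ler_wpM2l => //.
  apply: le_trans (loewner_inv hmu hLb _) _.
  apply: ler_wpM2l => //.
  rewrite /b norm2_tr; apply: le_trans (norm2_comb _ (fun i => gxb i)) _.
  by rewrite -/(norm1 z) hz mul1r.
apply: ge_sup => //; move=> _ [z hz <-].
apply: le_trans (key z hz) _.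
set N := norm2 (grad (fbeta f beta) x).
have mi0 : 0 < mu^-1 by rewrite invr_gt0.
have eN : e <= mu^-1 * N.
  have := ler_wpM2l (ltW mi0) hxxb; rewrite mulrA mulVf ?gt_eqF // mul1r.
  by [].
have K0 : 0 <= kappa * (1 + LH * Rd / mu).
  apply: mulr_ge0; first by rewrite /kappa divr_ge0 // ltW.
  by rewrite addr_ge0 // divr_ge0 ?mulr_ge0 // ltW.
have E3 : mu^-1 * (L * e + LH * e * (mu^-1 * (L * Rd))) = kappa * (1 + LH * Rd / mu) * e.
  by rewrite /kappa; field; rewrite gt_eqF.
have E4 : mu^-1 * (kappa * (1 + LH * Rd / mu)) * N = kappa * (1 + LH * Rd / mu) * (mu^-1 * N).
  by ring.
rewrite E3 E4; exact: ler_wpM2l.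
Qed.
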